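(* Let $G$ be a finite game that is $(\lambda,\mu)$-smooth with $\mu>0$ (with respect to a fixed welfare maximizer $a^*$). Then every sink equilibrium $\sigma$ of the better-response process of $G$ has a joint action $\tilde a$ in its support with $W(\tilde a)\ge\frac{\lambda}{\mu}W(a^* )$.
   Context: A finite game $G$ consists of agents $N=\{1,\dots,n\}$, finite nonempty action sets $\mathcal A_i$, joint action set $\mathcal A=\mathcal A_1\times\cdots\times\mathcal A_n$, a welfare function $W:\mathcal A\to\mathbb R_{\ge 0}$ and utility functions $U_i:\mathcal A\to\mathbb R$, $i\in N$. For $a\in\mathcal A$, $a_{-i}$ denotes the actions of all agents other than $i$, and $(b_i,a_{-i})$ is the joint action obtained from $a$ by replacing $a_i$ with $b_i$. Fix $a^*\in\arg\max_{a\in\mathcal A}W(a)$. For $\mu\ge\lambda\ge0$, $G$ is $(\lambda,\mu)$-smooth if $\sum_{i=1}^n\big(U_i(a)-U_i(a^*_i,a_{-i})\big)\le\mu W(a)-\lambda W(a^* )$ for all $a\in\mathcal A$. The better response set of agent $i$ at $a$ is $\mathrm{br}_i(a)=\{b_i\in\mathcal A_i: U_i(b_i,a_{-i})\ge U_i(a)\}$. The better-response process is the Markov chain on $\mathcal A$ in which, from state $a$, an agent $i$ is chosen uniformly at random from $N$, then $b_i$ is chosen uniformly at random from $\mathrm{br}_i(a)$, and the next state is $(b_i,a_{-i})$. A sink strongly connected component of this chain is a nonempty set $S\subseteq\mathcal A$ such that for all $a,\bar a\in S$ there is a positive-probability path from $a$ to $\bar a$, and no state outside $S$ is reachable with positive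 probability from $S$. A sink equilibrium of the better-response process is a stationary distribution of this chain whose support equals a sink strongly connected component. *)

(* Defs.v *)
From HB Require Import structures.
From mathcomp Require Import all_boot all_order all_algebra.
Set Implicit Arguments. Unset Strict Implicit. Unset Printing Implicit Defensive.
Import Order.TTheory GRing.Theory Num.Theory.
Local Open Scope ring_scope.

Section Game.
Variable R : realFieldType.
Variables (I : finType) (A : I -> finType).

Definition joint := {dffun forall i : I, A i}.

Definition upd (a : joint) (i : I) (b : A i) : joint :=
  [ffun j => if @eqP _ i j is ReflectT e then ecast k (A k) e b else a j].

Arguments upd a i b : clear implicits.
Variable U : I -> joint -> R.

Definition br (i : I) (a : joint) : {set (A i)} :=
  [set b : (A i) | U i a <= U i (upd a i b)].

Definition brP (a a' : joint) : R :=
  (#|I|%:R)^-1 * \sum_(i : I)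
     (#|br i a|%:R)^-1 * \sum_(b in br i a) (upd a i b == a')%:R.

Definition step : rel joint := fun a a' => 0 < brP a a'.
Definition reach (a a' : joint) : bool := connect step a a'.

Definition sink_scc (S : {set joint}) : Prop :=
  [/\ S != set0,
      (forall a b, a \in S -> b \in S -> reach a b) &
      (forall a b, a \in S -> reach a b -> b \in S)].

Definition stationary (sigma : joint -> R) : Prop :=
  [/\ forall a, 0 <= sigma a,
      \sum_a sigma a = 1 &
      forall a', sigma a' = \sum_a sigma a * brP a a'].

Definition sink_equilibrium (sigma : joint -> R) : Prop :=
  stationary sigma /\ sink_scc [set a | sigma a != 0].

Definition smooth (W : joint -> R) (astar : joint) (lambda mu : R) : Prop :=
  [/\ 0 <= lambda, lambda <= mu &
      forall a, \sum_i (U i a - U i (upd a i (astar i))) <= mu * W a - lambda * W astar].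
End Game.

(* Main.v *)
Require Import Defs.
From HB Require Import structures.
From mathcomp Require Import all_boot all_order all_algebra.
From mathcomp Require Import lra.
Import Order.TTheory GRing.Theory Num.Theory.
Local Open Scope ring_scope.

Section H.
Variables (I : finType) (A : I -> finType).

Lemma upd_same (a : joint A) i (b : A i) : @upd _ _ a i b i = b.
Proof.
rewrite /upd ffunE; case: eqP => // e.
by rewrite (eq_irrelevance e erefl).
Qed.

Lemma upd_other (a : joint A) i (b : A i) j : i != j -> @upd _ _ a i b j = a j.
Proof. by move=> nij; rewrite /upd ffunE; case: eqP => // e; rewrite e eqxx in nij. Qed.

Lemma upd_id (a : joint A) i : @upd _ _ a i (a i) = a.
Proof.
apply/ffunP => j; case: (eqVneq i j) => [<-|nij]; first by rewrite upd_same.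
by rewrite upd_other.
Qed.
End H.

Theorem proposition4 (R : realFieldType) (I : finType) (A : I -> finType)
    (W : joint A -> R) (U : I -> joint A -> R) (astar : joint A)
    (lambda mu : R) (sigma : joint A -> R) :
  (0 < #|I|)%N ->
  (forall a, 0 <= W a) ->
  (forall a, W a <= W astar) ->
  smooth U W astar lambda mu ->
  0 < mu ->
  sink_equilibrium U sigma ->
  exists at_ : joint A, sigma at_ != 0 /\ lambda / mu * W astar <= W at_.
Proof.
move=> I0 W0 Wmax [l0 lm sm] mu0 [_ [Sne _ Sclosed]].
set S := [set a | sigma a != 0] in Sne Sclosed *.
case/set0Pn: (Sne) => a0 a0S.
pose cnt (a : joint A) := #|[set j | a j == astar j]|.
have [a aS amax] := @arg_maxnP _ a0 (fun x => x \in S) cnt a0S.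
have aS' : sigma a != 0 by rewrite inE in aS.
case: (lerP (lambda / mu * W astar) (W a)) => [h|h]; first by exists a.
exfalso.
have hneg : \sum_i (U i a - U i (@upd _ _ a i (astar i))) < 0.
  apply: (le_lt_trans (sm a)); rewrite subr_lt0.
  by rewrite mulrC -ltr_pdivlMr // mulrAC.
have [i hi] : exists i, U i a - U i (@upd _ _ a i (astar i)) < 0.
  apply/existsP; rewrite -[[exists _, _]]negbK negb_exists; apply/negP => /forallP hn.
  move: hneg; rewrite ltNge sumr_ge0 // => i _.
  by move: (hn i); rewrite -leNgt.
set b := @upd _ _ a i (astar i) in hi.
have ab : a i != astar i.
  by apply/eqP => e; move: hi; rewrite /b -e upd_id subrr ltxx.
have Hin : astar i \in br U i a by rewrite inE -subr_ge0 ltW // -opprB oppr_gt0.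
have brpos : (0 < #|br U i a|)%N by apply/card_gt0P; exists (astar i).
have inner : 0 < \sum_(c in br U i a) ((@upd _ _ a i c == b)%:R : R).
  rewrite (bigD1 (astar i)) //= eqxx.
  have : 0 <= \sum_(c in br U i a | c != astar i) ((@upd _ _ a i c == b)%:R : R).
    by apply: sumr_ge0 => c _; rewrite ler0n.
  rewrite [X in X + _]/=; move=> ?; lra.
have st : step U a b.
  rewrite /step /brP mulr_gt0 ?invr_gt0 ?ltr0n //.
  rewrite (bigD1 i) //=.
  have : 0 <= \sum_(j | j != i) (#|br U j a|%:R^-1 *
      \sum_(c in br U j a) ((@upd _ _ a j c == b)%:R : R)).
    apply: sumr_ge0 => j _; apply: mulr_ge0; first by rewrite invr_ge0 ler0n.
    by apply: sumr_ge0 => c _; rewrite ler0n.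
  have : 0 < #|br U i a|%:R^-1 * \sum_(c in br U i a) ((@upd _ _ a i c == b)%:R : R).
    by rewrite mulr_gt0 // invr_gt0 ltr0n.
  move=> ? ?; lra.
have bS : b \in S by apply: (Sclosed a b aS); apply: connect1.
have H : (cnt b <= cnt a)%N := amax b bS.
move: H; rewrite leqNgt => /negP; apply; apply: proper_card.
apply/properP; split.
  apply/subsetP => j; rewrite !inE => /eqP e.
  case: (eqVneq i j) => [ij|nij]; first by rewrite -ij upd_same.
  by rewrite /b upd_other // e.
by exists i; rewrite !inE ?upd_same // (negbTE ab).
Qed.
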